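(* Let $p,q$ be integers with $p\equiv 2\pmod 4$ and $q\equiv 3\pmod 4$, and let $(u_n)_{n\ge0}$ be defined by $u_0=0$, $u_1=1$ and $u_{n+2}=pu_{n+1}+qu_n$ for all $n\ge0$. Then for all integers $n\ge0$ and $k\ge1$, $$u_{n+2^k}\equiv u_n+2^k\pmod{2^{k+1}}.$$ *)

(* Defs.v *)
From Stdlib Require Import ZArith.
Open Scope Z_scope.

Fixpoint lucas_pair (p q : Z) (n : nat) : Z * Z :=
  match n with
  | O => (0, 1)
  | S m => let (a, b) := lucas_pair p q m in (b, p * b + q * a)
  end.

Definition u (p q : Z) (n : nat) : Z := fst (lucas_pair p q n).

(* Main.v *)
Require Import Defs.
From Stdlib Require Import ZArith Lia.
Open Scope Z_scope.

Lemma u_S p q n : u p q (S n) = snd (lucas_pair p q n).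
Proof. unfold u; simpl; destruct (lucas_pair p q n); reflexivity. Qed.

Lemma u_SS p q n : u p q (S (S n)) = p * u p q (S n) + q * u p q n.
Proof.
  rewrite !u_S. unfold u. simpl. destruct (lucas_pair p q n); reflexivity.
Qed.

Lemma u0 p q : u p q 0 = 0. Proof. reflexivity. Qed.
Lemma u1 p q : u p q 1 = 1. Proof. reflexivity. Qed.

Lemma u_add p q m : forall n,
  u p q (m + n + 1) = u p q (m + 1) * u p q (n + 1) + q * u p q m * u p q n.
Proof.
  induction m as [|m IH]; intros n.
  - change (0 + n + 1)%nat with (n + 1)%nat. rewrite u0, u1. ring.
  - replace (S m + n + 1)%nat with (m + S n + 1)%nat by lia.
    rewrite IH.
    replace (S n + 1)%nat with (S (S n)) by lia.
    replace (S m + 1)%nat with (S (S m)) by lia.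
    rewrite !u_SS. replace (m+1)%nat with (S m) by lia.
    replace (n+1)%nat with (S n) by lia. ring.
Qed.

Definition D p q (M : nat) :=
  (2 * Z.of_nat M | u p q M - Z.of_nat M) /\
  (2 * Z.of_nat M | u p q (M + 1) - (Z.of_nat M + 1)).

Lemma double p q s t (hp : p = 2 + 4 * s) (hq : q = 3 + 4 * t) M :
  (1 <= M)%nat -> D p q M -> D p q (M + M).
Proof.
  intros HM [[a Ha] [b Hb]].
  destruct M as [|M0]; [lia|].
  assert (E1 : u p q (S M0 + S M0 + 1) = u p q (S M0 + 1) ^ 2 + q * u p q (S M0) ^ 2)
    by (rewrite u_add; ring).
  assert (E2 : u p q (S M0 + S M0) = u p q (S M0) * (2 * u p q (S M0 + 1) - p * u p q (S M0))).
  { replace (S M0 + S M0)%nat with (M0 + S M0 + 1)%nat by lia.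
    rewrite u_add.
    replace (S M0 + 1)%nat with (S (S M0)) by lia.
    replace (M0 + 1)%nat with (S M0) by lia.
    rewrite u_SS. ring. }
  set (N := Z.of_nat (S M0)) in *.
  assert (HN : Z.of_nat (S M0 + S M0) = 2 * N) by (unfold N; lia).
  assert (A : u p q (S M0) = N + 2 * N * a) by lia.
  assert (B : u p q (S M0 + 1) = N + 1 + 2 * N * b) by lia.
  split; rewrite HN.
  - rewrite E2, A, B.
    exists (a + N * (1 + 2 * a) * (b - s - a - 2 * s * a)). subst p. ring.
  - rewrite E1, A, B.
    exists (N * (1 + t) + b * (N + 1) + N * b ^ 2 + q * N * (a + a ^ 2)).
    subst q. ring.
Qed.

Lemma Dpow p q s t (hp : p = 2 + 4 * s) (hq : q = 3 + 4 * t) k : D p q (2 ^ k).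
Proof.
  induction k as [|k IH].
  - split; simpl; rewrite ?u1; [exists 0; reflexivity|].
    change (u p q 2) with (p * 1 + q * 0). exists (2 * s). subst p q. ring.
  - simpl (2 ^ S k)%nat. rewrite Nat.add_0_r. apply (double p q s t); auto.
    pose proof (Nat.pow_nonzero 2 k). lia.
Qed.

Theorem mainTheorem8 (p q : Z) (hp : p mod 4 = 2) (hq : q mod 4 = 3)
  (n k : nat) (hk : (1 <= k)%nat) :
  (u p q (n + 2 ^ k)%nat - (u p q n + 2 ^ Z.of_nat k)) mod 2 ^ (Z.of_nat k + 1) = 0.
Proof.
  set (s := p / 4). set (t := q / 4).
  assert (Hp : p = 2 + 4 * s) by (pose proof (Z.div_mod p 4); unfold s; lia).
  assert (Hq : q = 3 + 4 * t) by (pose proof (Z.div_mod q 4); unfold t; lia).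
  destruct (Dpow p q s t Hp Hq k) as [[a Ha] [b Hb]].
  set (M := (2 ^ k)%nat) in *.
  assert (HM : Z.of_nat M = 2 ^ Z.of_nat k) by (unfold M; rewrite Nat2Z.inj_pow; reflexivity).
  rewrite Z.pow_add_r by lia. rewrite <- HM.
  set (N := Z.of_nat M) in *.
  assert (Npos : 0 < N) by (unfold N, M; pose proof (Nat.pow_nonzero 2 k); lia).
  apply Z.mod_divide; [lia|].
  assert (H : forall n, (2 * N | u p q (n + M) - (u p q n + N)) /\
                        (2 * N | u p q (S n + M) - (u p q (S n) + N))).
  { induction n0 as [|n0 [[x Hx] [y Hy]]].
    - split.
      + exists a. change (u p q 0) with 0. simpl (0 + M)%nat. lia.
      + exists b. replace (1 + M)%nat with (M + 1)%nat by lia. rewrite u1. lia.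
    - split; [exists y; lia|].
      exists (p * y + q * x + 2 * (1 + s + t)).
      replace (S (S n0) + M)%nat with (S (S (n0 + M))) by lia.
      rewrite !u_SS. replace (S (n0 + M)) with (S n0 + M)%nat by lia.
      assert (X : u p q (n0 + M) = u p q n0 + N + x * (2 * N)) by lia.
      assert (Y : u p q (S n0 + M) = u p q (S n0) + N + y * (2 * N)) by lia.
      rewrite X, Y. rewrite Hp, Hq. ring. }
  destruct (H n) as [[x Hx] _]. exists x. rewrite Z.pow_1_r. lia.
Qed.
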